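(* Let $G$ be a connected undirected graph with positive edge weights, weighted adjacency matrix $\mathbf{A}$, diagonal degree matrix $\mathbf{D}$ and Laplacian $\mathbf{L}=\mathbf{D}-\mathbf{A}$. Let $\mathbf{\Pi}=\mathbf{I}-\frac{1}{n}\mathbf{1}\mathbf{1}^\top$ and $\pi=\frac{\mathbf{D}\mathbf{1}}{\mathbf{1}^\top\mathbf{D}\mathbf{1}}$. Then for every vertex $u$, $$\mathbf{L}^+(\mathbf{1_u}-\pi)=\frac12\,\mathbf{\Pi}\mathbf{D}^{-1}\sum_{t=0}^{\infty}\left(\left(\tfrac12\mathbf{I}+\tfrac12\mathbf{A}\mathbf{D}^{-1}\right)^t\mathbf{1_u}-\pi\right).$$
   Context: $\mathbf{L}^+$ denotes the Moore–Penrose pseudoinverse, $\mathbf{1}$ the all-ones vector, $\mathbf{1_u}$ the indicator vector of vertex $u$, and $n$ the number of vertices. *)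

(* Defs.v *)
From HB Require Import structures.
From mathcomp Require Import all_boot all_order all_algebra.
From mathcomp Require Import all_classical all_reals all_analysis.
Set Implicit Arguments. Unset Strict Implicit. Unset Printing Implicit Defensive.
Import Order.TTheory GRing.Theory Num.Theory.
Local Open Scope ring_scope.

(* Vertices are 'I_n; a weighted undirected graph is given by its weighted
   adjacency matrix A (symmetric, nonnegative, zero diagonal; A i j > 0 iff ij is an edge). *)

(* Moore-Penrose pseudoinverse conditions (real matrices: conjugate transpose = transpose). *)
Definition is_MP_pinv (R : ringType) (n : nat) (M X : 'M[R]_n) : Prop :=
  [/\ M *m X *m M = M, X *m M *m X = X, (M *m X)^T = M *m X & (X *m M)^T = X *m M].

(* matrix power M^t, valid for every dimension n *)
Definition mxpow (R : ringType) (n : nat) (M : 'M[R]_n) (t : nat) : 'M[R]_n :=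
  iter t (mulmx M) 1%:M.

Definition degmx (R : ringType) (n : nat) (A : 'M[R]_n) : 'M[R]_n :=
  diag_mx (\row_i \sum_j A i j).

Definition ones (R : ringType) (n : nat) : 'cV[R]_n := const_mx 1.

Definition laplacian (R : ringType) (n : nat) (A : 'M[R]_n) : 'M[R]_n := degmx A - A.

Definition statdist (R : fieldType) (n : nat) (A : 'M[R]_n) : 'cV[R]_n :=
  (((ones R n)^T *m degmx A *m ones R n) 0 0)^-1 *: (degmx A *m ones R n).

Definition centering (R : fieldType) (n : nat) : 'M[R]_n :=
  1%:M - (n%:R)^-1 *: (ones R n *m (ones R n)^T).

Definition lazywalk (R : fieldType) (n : nat) (A : 'M[R]_n) : 'M[R]_n :=
  2^-1 *: 1%:M + 2^-1 *: (A *m invmx (degmx A)).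

Definition unitvec (R : ringType) (n : nat) (u : 'I_n) : 'cV[R]_n := delta_mx u 0.

(* Main.v *)
Require Import Defs.
From HB Require Import structures.
From mathcomp Require Import all_boot all_order all_algebra.
From mathcomp Require Import all_classical all_reals all_analysis.
From mathcomp Require Import ring lra.
Import Order.TTheory GRing.Theory Num.Theory numFieldNormedType.Exports.
Local Open Scope ring_scope.
Section Gen.
Set Implicit Arguments. Unset Strict Implicit.
Variable R : realFieldType.
Variable n : nat.
Implicit Types M P : 'M[R]_n.

Lemma mxpowS M t : mxpow M t.+1 = M *m mxpow M t. Proof. by []. Qed.
Lemma mxpow0 M : mxpow M 0 = 1%:M. Proof. by []. Qed.
Lemma mxpowD M s t : mxpow M (s + t) = mxpow M s *m mxpow M t.
Proof.
elim: s => [|s IH]; first by rewrite add0n mxpow0 mul1mx.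
by rewrite addSn !mxpowS IH mulmxA.
Qed.
Lemma mxpowSr M t : mxpow M t.+1 = mxpow M t *m M.
Proof. by rewrite -addn1 mxpowD /mxpow /= mulmx1. Qed.

Definition cstoch M := (ones R n)^T *m M = (ones R n)^T.

Lemma cstoch_pow M t : cstoch M -> cstoch (mxpow M t).
Proof.
move=> cM; elim: t => [|t IH]; first by rewrite /cstoch mxpow0 mulmx1.
by rewrite /cstoch mxpowS mulmxA cM.
Qed.

Lemma colsum M j : cstoch M -> \sum_i M i j = 1.
Proof.
move=> /matrixP /(_ 0 j); rewrite !mxE => <-.
by apply: eq_bigr => i _; rewrite !mxE mul1r.
Qed.

Lemma sum_pres M (z : 'cV[R]_n) : cstoch M -> \sum_i (M *m z) i 0 = \sum_i z i 0.
Proof.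
move=> cM; under eq_bigr do rewrite mxE.
rewrite exchange_big /=; apply: eq_bigr => j _.
by rewrite -mulr_suml colsum // mul1r.
Qed.

Definition nonneg M := forall i j, 0 <= M i j.

Lemma nonneg_mul M P : nonneg M -> nonneg P -> nonneg (M *m P).
Proof. by move=> hM hP i j; rewrite mxE sumr_ge0 // => k _; rewrite mulr_ge0. Qed.

Lemma nonneg_pow M t : nonneg M -> nonneg (mxpow M t).
Proof.
move=> hM; elim: t => [|t IH]; first by move=> i j; rewrite mxpow0 mxE ler0n.
by rewrite mxpowS; apply: nonneg_mul.
Qed.

Definition nrm (z : 'cV[R]_n) := \sum_i `|z i 0|.

Lemma nrm_ge0 z : 0 <= nrm z.
Proof. by rewrite sumr_ge0. Qed.

Lemma contract M (m : R) (z : 'cV[R]_n) :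
  (forall i j, m <= M i j) -> cstoch M -> \sum_i z i 0 = 0 ->
  nrm (M *m z) <= (1 - n%:R * m) * nrm z.
Proof.
move=> hm cM hz.
have e i : (M *m z) i 0 = \sum_j (M i j - m) * z j 0.
  rewrite mxE.
  under [RHS]eq_bigr do rewrite mulrBl.
  by rewrite sumrB -mulr_sumr hz mulr0 subr0.
rewrite /nrm.
apply: (@le_trans _ _ (\sum_i \sum_j (M i j - m) * `|z j 0|)).
  apply: ler_sum => i _; rewrite e.
  apply: le_trans (ler_norm_sum _ _ _) _.
  apply: ler_sum => j _; rewrite normrM ger0_norm //.
  by rewrite subr_ge0.
rewrite exchange_big /= mulr_sumr; apply: ler_sum => j _.
rewrite -mulr_suml sumrB colsum // sumr_const card_ord -mulr_natl.
by rewrite mulr1 mulr_natl.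
Qed.

End Gen.

Section Graph.
Variable R : realType.
Variable n : nat.
Variable A : 'M[R]_n.
Hypothesis n2 : (2 <= n)%N.
Hypothesis Asym : A^T = A.
Hypothesis Age0 : forall i j, 0 <= A i j.
Hypothesis Adiag : forall i, A i i = 0.
Hypothesis Aconn : forall i j, connect [rel x y | 0 < A x y] i j.

Definition dg i := \sum_j A i j.

Lemma Asy i j : A i j = A j i.
Proof. by rewrite -{1}Asym mxE. Qed.

Lemma n_gt0 : (0 < n)%N.
Proof. by apply: leq_trans n2. Qed.

Lemma d_gt0 i : 0 < dg i.
Proof.
have h0 : (0 < n)%N by apply: leq_trans n2.
have h1 : (1 < n)%N by [].
pose j0 := Ordinal h0; pose j1 := Ordinal h1.
have [j hij] : exists j, j != i.
  case: (eqVneq i j0) => [->|h]; last by exists j0; rewrite eq_sym.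
  by exists j1.
move: (Aconn i j) => /connectP [p hp ep].
case: p hp ep => [|y p] /=; first by move=> _ e; rewrite e eqxx in hij.
move=> /andP [hy _] _.
rewrite /dg (bigD1 y) //= (lt_le_trans hy) // lerDl sumr_ge0 //.
Qed.

Definition Dinv := diag_mx (\row_i (dg i)^-1).

Lemma DDinv : degmx A *m Dinv = 1%:M.
Proof.
rewrite /degmx mul_diag_mx; apply/matrixP => i j; rewrite !mxE.
case: (eqVneq i j) => [->|h]; last by rewrite mulr0n mulr0.
by rewrite !mulr1n mulfV // gt_eqF // d_gt0.
Qed.

Lemma invD : invmx (degmx A) = Dinv.
Proof.
have [hu _] := mulmx1_unit DDinv.
by rewrite -[invmx _]mulmx1 -DDinv mulmxA mulVmx // mul1mx.
Qed.

Definition W := lazywalk A.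

Lemma Wij i j : W i j = 2^-1 * ((i == j)%:R + A i j / dg j).
Proof. by rewrite /W /lazywalk invD mul_mx_diag !mxE mulrDr. Qed.

Lemma W_ge0 : nonneg W.
Proof.
move=> i j; rewrite Wij mulr_ge0 ?invr_ge0 ?ler0n // addr_ge0 ?ler0n //.
by rewrite divr_ge0 // ltW // d_gt0.
Qed.

Lemma W_cs : cstoch W.
Proof.
apply/matrixP => k j; rewrite [LHS]mxE [RHS]mxE [RHS]mxE.
under eq_bigr do rewrite /ones [_^T _ _]mxE mxE mul1r Wij.
rewrite -mulr_sumr big_split /= (bigD1 j) //= eqxx big1; last first.
  by move=> i /negPf ->.
rewrite -mulr_suml (eq_bigr (fun i => A j i)); last by move=> i _; rewrite Asy.
rewrite mulfV ?gt_eqF ?d_gt0 // addr0.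
by rewrite -[1 + 1]/(2%:R) mulVf // pnatr_eq0.
Qed.

Lemma W_diag i : 2^-1 <= W i i.
Proof.
rewrite Wij eqxx mulrDr mulr1 lerDl mulr_ge0 ?invr_ge0 ?ler0n //.
by rewrite divr_ge0 // ltW // d_gt0.
Qed.

Lemma W_edge i j : 0 < A i j -> 0 < W i j.
Proof.
move=> h; rewrite Wij mulr_gt0 ?invr_gt0 ?ltr0n // ltr_wpDl ?ler0n //.
by rewrite divr_gt0 // d_gt0.
Qed.

Definition Dv := degmx A *m ones R n.

Lemma DvE i : Dv i 0 = dg i.
Proof.
rewrite /Dv /degmx mul_diag_mx !mxE mulr1.
by [].
Qed.

Lemma WDv : W *m Dv = Dv.
Proof.
apply/matrixP => i k; rewrite (ord1 k) [LHS]mxE DvE.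
under eq_bigr do rewrite Wij DvE.
rewrite (eq_bigr (fun j => 2^-1 * ((i==j)%:R * dg j + A i j))); last first.
  by move=> j _; rewrite -mulrA mulrDl divfK // gt_eqF // d_gt0.
rewrite -mulr_sumr big_split /= (bigD1 i) //= eqxx big1; last first.
  by move=> j; rewrite eq_sym => /negPf ->; rewrite mul0r.
rewrite mul1r addr0 -/(dg i).
by rewrite -[_ + _](mulr_natl (dg i) 2) mulrA mulVf ?pnatr_eq0 // mul1r.
Qed.

Definition pi := statdist A.

Lemma sE : ((ones R n)^T *m degmx A *m ones R n) 0 0 = \sum_i dg i.
Proof.
rewrite -mulmxA -/Dv mxE; apply: eq_bigr => i _.
by rewrite DvE !mxE mul1r.
Qed.

Lemma s_gt0 : 0 < \sum_i dg i.
Proof.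
rewrite (bigD1 (Ordinal n_gt0)) //=.
apply: (lt_le_trans (d_gt0 (Ordinal n_gt0))); rewrite lerDl.
by rewrite sumr_ge0 // => i _; rewrite ltW // d_gt0.
Qed.

Lemma Wpi : W *m pi = pi.
Proof. by rewrite /pi /statdist -scalemxAr -/Dv WDv. Qed.

Lemma Wpow_pi t : mxpow W t *m pi = pi.
Proof.
elim: t => [|t IH]; first by rewrite mxpow0 mul1mx.
by rewrite mxpowS -mulmxA IH Wpi.
Qed.

Lemma pi_sum : \sum_i pi i 0 = 1.
Proof.
rewrite /pi /statdist sE.
under eq_bigr do rewrite mxE -/Dv DvE.
by rewrite -mulr_sumr mulVf // gt_eqF // s_gt0.
Qed.

Variable u : 'I_n.

Definition z0 := unitvec R u - pi.

Lemma z0_sum : \sum_i z0 i 0 = 0.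
Proof.
have e i : z0 i 0 = unitvec R u i 0 - pi i 0 by rewrite /z0 !mxE.
under eq_bigr do rewrite e.
rewrite sumrB pi_sum (bigD1 u) //= big1; last first.
  by move=> i /negPf hi; rewrite /unitvec mxE hi.
by rewrite /unitvec mxE !eqxx addr0 subrr.
Qed.

Definition zt t := mxpow W t *m z0.

Lemma ztE t : mxpow W t *m unitvec R u - statdist A = zt t.
Proof. by rewrite /zt /z0 mulmxBr Wpow_pi. Qed.

Lemma zt_sum t : \sum_i zt t i 0 = 0.
Proof. by rewrite /zt sum_pres ?z0_sum //; apply: cstoch_pow; apply: W_cs. Qed.

Lemma sum_ge_term (F : 'I_n -> R) y : (forall k, 0 <= F k) -> F y <= \sum_k F k.
Proof.
move=> h; rewrite (bigD1 y) //= lerDl sumr_ge0 //.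
Qed.

Definition erel := [rel x y : 'I_n | 0 < A x y].

Lemma path_pos p x : path erel x p -> 0 < mxpow W (size p) (last x p) x.
Proof.
elim: p x => [|y p IH] x /=.
  by move=> _; rewrite ?mxpow0 mxE eqxx ltr01.
move=> /andP [hxy hp].
rewrite -mxpowS mxpowSr mxE.
apply: lt_le_trans (sum_ge_term y _).
  by rewrite mulr_gt0 // ?IH // W_edge // Asy.
by move=> k; rewrite mulr_ge0 //; [apply: nonneg_pow; apply: W_ge0 | apply: W_ge0].
Qed.

Lemma pos_mono t i j : 0 < mxpow W t i j -> 0 < mxpow W t.+1 i j.
Proof.
move=> h; rewrite mxpowS mxE.
apply: lt_le_trans (sum_ge_term i _).
  by rewrite mulr_gt0 // (lt_le_trans _ (W_diag i)) // invr_gt0 ltr0n.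
by move=> k; rewrite mulr_ge0 //; [apply: W_ge0 | apply: nonneg_pow; apply: W_ge0].
Qed.

Lemma pos_mono_le t s i j : (t <= s)%N -> 0 < mxpow W t i j -> 0 < mxpow W s i j.
Proof.
move=> /subnK <- h; elim: (s - t)%N => [|k IH] //.
by rewrite addSn pos_mono.
Qed.

Lemma exists_pos i j : exists k, 0 < mxpow W k i j.
Proof.
move: (Aconn j i) => /connectP [p hp ->].
by exists (size p); apply: path_pos.
Qed.

Definition K := (\max_(p : 'I_n * 'I_n) xchoose (exists_pos p.1 p.2))%N.

Lemma WK_pos i j : 0 < mxpow W K i j.
Proof.
apply: (@pos_mono_le (xchoose (exists_pos i j))).
  exact: (@leq_bigmax _ (fun p : 'I_n * 'I_n => xchoose (exists_pos p.1 p.2)) (i, j)).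
exact: (xchooseP (exists_pos i j)).
Qed.

Definition mK := \big[Num.min/1]_(p : 'I_n * 'I_n) mxpow W K p.1 p.2.

Lemma mK_gt0 : 0 < mK.
Proof.
rewrite /mK; apply: (big_ind (fun x => 0 < x)) => //.
  by move=> x y hx hy; rewrite lt_min hx hy.
by move=> p _; apply: WK_pos.
Qed.

Lemma mK_le i j : mK <= mxpow W K i j.
Proof.
rewrite /mK (bigD1 (i, j)) //= ge_min lexx //.
Qed.

Definition cK := 1 - n%:R * mK.
Definition f t := nrm (zt t).

Lemma ztS t : zt t.+1 = W *m zt t.
Proof. by rewrite /zt mxpowS mulmxA. Qed.

Lemma ztK t : zt (K + t) = mxpow W K *m zt t.
Proof. by rewrite /zt mxpowD mulmxA. Qed.

Lemma f_ge0 t : 0 <= f t.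
Proof. exact: nrm_ge0. Qed.

Lemma f_mono t : f t.+1 <= f t.
Proof.
rewrite /f ztS.
have := @contract _ _ W 0 (zt t) W_ge0 W_cs (zt_sum t).
by rewrite mulr0 subr0 mul1r.
Qed.

Lemma f_le0 t : f t <= f 0.
Proof. by elim: t => [|t IH] //; apply: le_trans (f_mono t) IH. Qed.

Lemma fK t : f (K + t) <= cK * f t.
Proof.
rewrite /f ztK.
apply: (@contract _ _ (mxpow W K) mK (zt t) mK_le _ (zt_sum t)).
by apply: cstoch_pow; apply: W_cs.
Qed.

Lemma sum_bound N : \sum_(0 <= t < N) f t <= K%:R * f 0 / (n%:R * mK).
Proof.
set S := \sum_(0 <= t < N) f t.
have h1 : S <= \sum_(0 <= t < K + N) f t.
  rewrite (@big_cat_nat _ _ _ N) //= ?leq_addl // lerDl sumr_ge0 // => t _.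
  exact: f_ge0.
have h2 : \sum_(0 <= t < K + N) f t
          = \sum_(0 <= t < K) f t + \sum_(0 <= t < N) f (K + t).
  rewrite (@big_cat_nat _ _ _ K) //= ?leq_addr //; congr (_ + _).
  rewrite -{1}(add0n K) big_addn addKn.
  by apply: eq_bigr => t _; rewrite addnC.
have h3 : \sum_(0 <= t < K) f t <= K%:R * f 0.
  apply: le_trans (ler_sum _ (fun t _ => f_le0 t)) _.
  by rewrite sumr_const_nat subn0 mulr_natl.
have h4 : \sum_(0 <= t < N) f (K + t) <= cK * S.
  by rewrite /S mulr_sumr; apply: ler_sum => t _; exact: fK.
have h : S <= K%:R * f 0 + cK * S.
  by apply: le_trans h1 _; rewrite h2 lerD.
have hp : 0 < n%:R * mK by rewrite mulr_gt0 ?ltr0n ?n_gt0 ?mK_gt0.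
rewrite ler_pdivlMr //.
move: h; rewrite /cK mulrBl mul1r.
set a := K%:R * f 0; set b := n%:R * mK.
rewrite [b * S]mulrC.
move=> h; rewrite -subr_ge0; rewrite -subr_ge0 in h.
by rewrite (le_trans h) // le_eqVlt; apply/orP; left; apply/eqP; ring.
Qed.

Lemma cvg_i i : cvgn (series (fun t => zt t i 0)).
Proof.
apply: normed_cvg; apply: nondecreasing_is_cvgn.
  by apply: nondecreasing_series => k _ _; exact: normr_ge0.
exists (K%:R * f 0 / (n%:R * mK)) => _ [N _ <-].
apply: le_trans (sum_bound N).
rewrite /series /=; apply: ler_sum => t _.
rewrite /f /nrm.
exact (@sum_ge_term (fun k => `|zt t k 0|) i (fun k => normr_ge0 _)).
Qed.
Local Open Scope classical_set_scope.

Definition Xv := \col_i limn (series (fun t => zt t i 0)).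
Definition SN N := \col_i series (fun t => zt t i 0) N.

Lemma telescope N : (1%:M - W) *m SN N = z0 - zt N.
Proof.
elim: N => [|N IH].
  have -> : SN 0 = 0.
    apply/matrixP => i j; rewrite !mxE.
    by rewrite /series /= big_geq.
  by rewrite mulmx0 /zt mxpow0 mul1mx subrr.
have -> : SN N.+1 = SN N + zt N.
  apply/matrixP => i j; rewrite (ord1 j) [LHS]mxE [in RHS]mxE [SN N _ _]mxE.
  by rewrite seriesSr.
rewrite mulmxDr IH ztS mulmxBl mul1mx.
by rewrite addrA subrK.
Qed.

Lemma sum_cvg (F : nat -> 'I_n -> R) (l : 'I_n -> R) (r : seq 'I_n) :
  (forall j, (fun N => F N j) @ \oo --> l j) ->
  (fun N => \sum_(j <- r) F N j) @ \oo --> \sum_(j <- r) l j.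
Proof.
move=> h; elim: r => [|a r IH].
  have -> : (fun N => \sum_(j <- [::]) F N j) = (fun _ => 0).
    by apply/funext => N; rewrite big_nil.
  by rewrite big_nil; exact: cvg_cst.
have -> : (fun N => \sum_(j <- a :: r) F N j)
          = (fun N => F N a + \sum_(j <- r) F N j).
  by apply/funext => N; rewrite big_cons.
rewrite big_cons; exact: cvgD.
Qed.

Lemma IW_X : (1%:M - W) *m Xv = z0.
Proof.
apply/matrixP => i k; rewrite (ord1 k).
have h1 : (fun N => ((1%:M - W) *m SN N) i 0) @ \oo --> ((1%:M - W) *m Xv) i 0.
  have -> : (fun N => ((1%:M - W) *m SN N) i 0)
     = (fun N => \sum_j (1%:M - W) i j * series (fun t => zt t j 0) N).
    by apply/funext => N; rewrite mxE; apply: eq_bigr => j _; rewrite [SN N j 0]mxE.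
  rewrite mxE; under [X in _ --> X]eq_bigr do rewrite [Xv _ _]mxE.
  apply: sum_cvg => j; apply: cvgMl_tmp; exact: cvg_i.
have h2 : (fun N => ((1%:M - W) *m SN N) i 0) @ \oo --> z0 i 0.
  have -> : (fun N => ((1%:M - W) *m SN N) i 0) = (fun N => z0 i 0 - zt N i 0).
    by apply/funext => N; rewrite telescope mxE [(- zt N) _ _]mxE.
  rewrite -[X in _ --> X]subr0; apply: cvgB; first exact: cvg_cst.
  exact: (cvg_series_cvg_0 (@cvg_i i)).
exact: (cvg_unique _ h1 h2).
Qed.

Lemma IW_L : 1%:M - W = 2^-1 *: (laplacian A *m Dinv).
Proof.
rewrite /W /lazywalk invD /laplacian mulmxBl DDinv scalerBr.
rewrite opprD addrA; congr (_ - _).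
rewrite -{1}(scale1r 1%:M) -scalerBl; congr (_ *: _).
have h2 : (2 : R) != 0 by rewrite pnatr_eq0.
by field.
Qed.

Lemma L_Xv : laplacian A *m (Dinv *m Xv) = 2 *: z0.
Proof.
have := IW_X; rewrite IW_L -scalemxAl mulmxA => <-.
by rewrite scalerA mulfV ?pnatr_eq0 // scale1r.
Qed.

Lemma LvE (v : 'cV[R]_n) x :
  (laplacian A *m v) x 0 = \sum_j A x j * (v x 0 - v j 0).
Proof.
rewrite /laplacian mulmxBl.
have -> : (degmx A *m v - A *m v) x 0 = (degmx A *m v) x 0 - (A *m v) x 0.
  by rewrite !mxE.
have -> : (degmx A *m v) x 0 = dg x * v x 0 by rewrite /degmx mul_diag_mx !mxE.
rewrite mxE; under [RHS]eq_bigr do rewrite mulrBr.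
by rewrite sumrB -mulr_suml.
Qed.

Lemma ker_const (v : 'cV[R]_n) : laplacian A *m v = 0 -> forall i j, v i 0 = v j 0.
Proof.
move=> hv.
case: (@arg_maxP _ _ _ (Ordinal n_gt0) xpredT (fun i => v i 0)) => // im _ hmax.
set M := v im 0.
have step x y : v x 0 = M -> 0 < A x y -> v y 0 = M.
  move=> hx hxy.
  have e := LvE v x; rewrite hv mxE hx in e.
  have hge : forall j, true -> 0 <= A x j * (M - v j 0).
    by move=> j _; rewrite mulr_ge0 // subr_ge0; exact: hmax.
  have := @psumr_eq0P _ _ _ _ hge (esym e) y isT.
  move/eqP; rewrite mulf_eq0 (gt_eqF hxy) /= subr_eq0 => /eqP.
  by move=> ->.
have hpath p x : path erel x p -> v x 0 = M -> v (last x p) 0 = M.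
  elim: p x => [|y p IH] x //= /andP [hxy hp] hx.
  by apply: IH => //; apply: step hxy.
have all_eq i : v i 0 = M.
  move: (Aconn im i) => /connectP [p hp ->].
  exact: hpath.
by move=> i j; rewrite !all_eq.
Qed.

Variable Lp : 'M[R]_n.
Hypothesis hMP : is_MP_pinv (laplacian A) Lp.

Lemma P_eq : Lp *m laplacian A = centering R n.
Proof.
case: hMP => h1 h2 h3 h4.
set L := laplacian A; set P := Lp *m L.
have hL1 : L *m ones R n = 0.
  by apply/matrixP => x k; rewrite (ord1 k) LvE [RHS]mxE big1 // => j _; rewrite !mxE subrr mulr0.
have hP1 : P *m ones R n = 0 by rewrite /P -mulmxA hL1 mulmx0.
set Q := 1%:M - P.
have hLQ : L *m Q = 0 by rewrite /Q mulmxBr mulmx1 /P mulmxA h1 subrr.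
have hQc i k j : Q i j = Q k j.
  have hc : L *m col j Q = 0 by rewrite colE mulmxA hLQ mul0mx.
  have := ker_const hc i k; rewrite !mxE.
  by [].
have hQT : Q^T = Q by rewrite /Q linearB /= trmx1 h4.
have hQs i j : Q i j = Q j i by rewrite -{1}hQT mxE.
set j0 := Ordinal n_gt0.
have hQ i j : Q i j = Q j0 j0.
  by rewrite (hQc i j0) hQs (hQc j j0).
have hsum : Q *m ones R n = ones R n.
  by rewrite /Q mulmxBl hP1 subr0 mul1mx.
have hc : Q j0 j0 = n%:R^-1.
  have e : \sum_j Q j0 j = 1.
    move/matrixP: hsum => /(_ j0 0); rewrite [LHS]mxE /ones [RHS]mxE => <-.
    by apply: eq_bigr => j _; rewrite [const_mx 1 j 0]mxE mulr1.
  rewrite (eq_bigr (fun _ => Q j0 j0)) in e; last by move=> j _; rewrite hQ.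
  rewrite sumr_const card_ord in e.
  have hn : (n%:R : R) != 0 by rewrite pnatr_eq0 -lt0n n_gt0.
  by apply: (mulfI hn); rewrite mulfV // mulr_natl e.
have -> : P = 1%:M - Q by rewrite /Q opprB addrC subrK.
apply/matrixP => i j.
rewrite /centering [LHS]mxE [(- Q) i j]mxE hQ hc [RHS]mxE; congr (_ + _).
rewrite [RHS]mxE; congr (- _).
rewrite [RHS]mxE [(_ *m _) i j]mxE big_ord1 /ones !mxE !mulr1.
by [].
Qed.

End Graph.

Theorem lemma3p3 (R : realType) (n : nat) (A : 'M[R]_n) (Lp : 'M[R]_n) (u : 'I_n) :
  (2 <= n)%N ->
  A^T = A ->
  (forall i j, 0 <= A i j) ->
  (forall i, A i i = 0) ->
  (forall i j, connect [rel x y | 0 < A x y] i j) ->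
  is_MP_pinv (laplacian A) Lp ->
  let term := fun t : nat => mxpow (lazywalk A) t *m unitvec R u - statdist A in
  (forall i : 'I_n, cvgn (series (fun t => (term t i 0 : R)))) /\
  Lp *m (unitvec R u - statdist A)
  = 2^-1 *: (@centering R n *m invmx (degmx A)
             *m (\col_i limn (series (fun t => (term t i 0 : R))))).
Proof.
move=> n2 Asym Age0 Adiag Aconn hMP term.
have hterm : term = zt A u.
  by apply/funext => t; rewrite /term (ztE n2 Age0 Aconn).
rewrite hterm; split.
  by move=> i; exact: (cvg_i n2 Asym Age0 Aconn).
rewrite -/(Xv A u).
rewrite (invD n2 Age0 Aconn) -(P_eq n2 Age0 Aconn hMP) -!mulmxA.
rewrite (L_Xv n2 Asym Age0 Aconn u) -scalemxAr scalerA mulVf ?pnatr_eq0 // scale1r.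
by [].
Qed.
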